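(* Let $U\subset M_{\mathbb R}$ be a convex open set, let $\mathbf w=(m,P,\Theta)$ be a wall in $U$ with $P$ a tropical hyperplane in $U$, and write $\mathrm{Log}(\Theta)=\sum_{j,k\ge1}a_{jk}\,z^{km}\check\partial_n\,t^j$ as in the context. Let $u_2$ be an affine function on $U$ with $P=\{u_2=0\}$ and $u_2>0$ on $H_+$, and put $$\delta_m:=\Big(\frac{1}{\hbar\pi}\Big)^{1/2}e^{-u_2^2/\hbar}\,du_2 .$$ Then the element $\Pi:=-\delta_m\cdot\mathrm{Log}(\Theta)=-\sum_{j,k\ge1}a_{jk}\,\delta_m\,z^{km}\check\partial_n\,t^j\in\widehat{\mathbf G}^1(U)$ satisfies the Maurer–Cartan equation $\bar\partial\Pi+\tfrac12[\Pi,\Pi]=0$.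
   Context: Let $M\cong\mathbb Z^n$ be a lattice, $N=\mathrm{Hom}(M,\mathbb Z)$, $(m,n)\in\mathbb Z$ the natural pairing, $M_{\mathbb R}=M\otimes\mathbb R$. Open subsets of $M_{\mathbb R}$ carry the standard affine structure with flat connection $\nabla$ and affine coordinates $x_1,\dots,x_n$. Fix a Riemannian metric $g=(g_{jk})$ (of Hessian type) on $U$ and a parameter $\hbar>0$. For $n\in N$ (coordinates $n^j$) let $\partial_n:=\frac{\hbar}{4\pi}\sum_{j,k}n^jg_{jk}\,\partial/\partial x_k$. Let $R=\mathbb C[[t]]$, $\mathbf m=tR$. Let $\Omega^k_\hbar(U)$ be the space of complex $k$-forms on $U$ depending smoothly on $\hbar\in\mathbb R_{>0}$. $\mathbf G^*(U)$ is the space of finite sums $\sum\alpha_m^n\,z^m\check\partial_n$ with $\alpha_m^n\in\Omega^*_\hbar(U)$, $m\in M$, where $z^m$ and $\check\partial_n$ are formal symbols with $\check\partial_n$ additive in $n\in N$; it is graded by form degree, with differential $\bar\partial(\alpha z^m\check\partial_n)=(d\alpha)z^m\check\partial_n$ and bracket $$[\alpha z^m\check\partial_n,\beta z^{m'}\check\partial_{n'}]=\alpha\wedge\beta\,z^{m+m'}\check\partial_{(m',n)n'-(m,n')n}+\alpha\wedge(\nabla_{\partial_n}\beta)\,z^{m+m'}\check\partial_{n'}-(-1)^{|\alpha||\beta|}\beta\wedge(\nabla_{\partial_{n'}}\alpha)\,z^{m+m'}\check\partial_n$$ (extended $R$-bilinearly). $\widehat{\mathbf G}^*(U):=\varprojlim_N\mathbf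 G^*(U)\otimes_{\mathbb C}R/\mathbf m^{N+1}$. A wall $\mathbf w=(m,P,\Theta)$: $m\in M\setminus\{0\}$; $P$ an oriented tropical hyperplane (codimension one affine hyperplane with rational slope) in $U$ parallel to $m$, dividing $U$ into two open half-spaces $H_+$, $H_-$, where $H_+$ is the side into which the normal $\nu_P$ points, $\nu_P$ chosen so that $TP\oplus\mathbb R\nu_P$ has the orientation of $U$; $n\in N$ the unique primitive element vanishing on $TP$ with $(\nu_P,n)<0$; and $\mathrm{Log}(\Theta)=\sum_{j,k\ge1}a_{jk}z^{km}\check\partial_nt^j$ with $a_{jk}\in\mathbb C$ and, for each $j$, $a_{jk}\neq0$ for only finitely many $k$. *)

(* Defs.v *)
From HB Require Import structures.
From mathcomp Require Import all_boot all_order all_algebra.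
From mathcomp Require Import all_classical all_reals all_analysis.
From mathcomp Require Import complex.
Set Implicit Arguments. Unset Strict Implicit. Unset Printing Implicit Defensive.
Import Order.TTheory GRing.Theory Num.Theory.
Import numFieldNormedType.Exports.
Local Open Scope ring_scope.
Local Open Scope complex_scope.

Section Defs.
Variables (R : realType) (d : nat).

Definition vec := 'rV[R]_d.          (* points of M_R = R^d *)
Definition lattice := 'rV[int]_d.     (* M and N = Hom(M,Z), identified with Z^d *)
Local Notation C := (R[i]).

Definition pairing (m n : lattice) : int := \sum_(i < d) m 0 i * n 0 i.
Definition pairingR (n : lattice) (x : vec) : R := \sum_(i < d) (n 0 i)%:~R * x 0 i.

Definition primitive (n : lattice) : Prop :=
  forall (k : int) (n' : lattice), n = n' *~ k -> `|k| = 1.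

Definition ebasis (k : 'I_d) : vec := delta_mx 0 k.

Definition pdR (f : vec -> R) (k : 'I_d) (x : vec) : R :=
  derive1 (fun s : R => f (x + s *: ebasis k)) 0.
Definition pd (f : vec -> C) (k : 'I_d) (x : vec) : C :=
  Complex (pdR (fun y => complex.Re (f y)) k x) (pdR (fun y => complex.Im (f y)) k x).

(* complex differential forms on U depending on hbar:
   w hbar x I = coefficient of dx_I (I increasingly ordered) at x *)
Definition form := R -> vec -> {set 'I_d} -> C.

Definition form_scale (c : C) (a : form) : form := fun h x K => c * a h x K.
Definition fun_mul (f : R -> vec -> C) (a : form) : form := fun h x K => f h x * a h x K.

(* sign of dx_I /\ dx_J relative to dx_(I u J) *)
Definition wsign (I J : {set 'I_d}) : C :=
  (-1) ^+ #|[set ij : 'I_d * 'I_d | (ij.1 \in I) && (ij.2 \in J) && (ij.2 < ij.1)%N]|.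

Definition wedge (a b : form) : form := fun h x K =>
  \sum_(I : {set 'I_d}) \sum_(J : {set 'I_d} | [disjoint I & J] && (I :|: J == K))
     wsign I J * a h x I * b h x J.

Definition dform (a : form) : form := fun h x K =>
  \sum_(k in K) (-1) ^+ #|[set i in K | (i < k)%N]| * pd (fun y => a h y (K :\ k)) k x.

Definition dfun (f : vec -> R) : form := fun h x K =>
  \sum_(k < d) (K == [set k])%:R * (pdR f k x)%:C.

Definition proj (p : nat) (a : form) : form := fun h x K =>
  if #|K| == p then a h x K else 0.

Definition nabla (v : R -> vec -> vec) (a : form) : form := fun h x K =>
  \sum_(k < d) (v h x 0 k)%:C * pd (fun y => a h y K) k x.

Definition dvf (g : vec -> 'M[R]_d) (n : lattice) : R -> vec -> vec := fun h x =>
  \row_(k < d) (h / (4 * pi) * \sum_(j < d) (n 0 j)%:~R * g x j k).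

(* elements of G^*(U): finite formal sums of terms  alpha z^m checkpartial_n,
   a term being (alpha, m, n) *)
Definition term := (form * lattice * lattice)%type.
Definition Gelt := seq term.

(* coefficient of z^m checkpartial_(e_j) (checkpartial is additive in n,
   and N is free with basis e_j) *)
Definition coeffG (g : Gelt) (m : lattice) (j : 'I_d) : form := fun h x K =>
  \sum_(t <- g | t.1.2 == m) (t.2 0 j)%:~R * t.1.1 h x K.

Definition br_term (g : vec -> 'M[R]_d) (s t : term) : Gelt :=
  let: (a, m, n) := s in let: (b, m', n') := t in
  [:: (wedge a b, m + m', n' *~ pairing m' n - n *~ pairing m n');
      (wedge a (nabla (dvf g n) b), m + m', n');
      ((fun h x K => - \sum_(p < d.+1) \sum_(q < d.+1)
          (-1) ^+ (p * q) * wedge (proj q b) (nabla (dvf g n') (proj p a)) h x K),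
        m + m', n)].

Definition bracketG (g : vec -> 'M[R]_d) (u v : Gelt) : Gelt :=
  flatten [seq br_term g s t | s <- u, t <- v].

Definition dbarG (u : Gelt) : Gelt := [seq (dform t.1.1, t.1.2, t.2) | t <- u].

Definition scaleG (c : C) (u : Gelt) : Gelt :=
  [seq (form_scale c t.1.1, t.1.2, t.2) | t <- u].

Definition Gzero (U : set vec) (u : Gelt) : Prop :=
  forall (h : R), 0 < h -> forall x, U x ->
  forall (m : lattice) (j : 'I_d) (K : {set 'I_d}), coeffG u m j h x K = 0.

(* elements of hat G^*(U) = G^*(U)[[t]]: sequence of t^N-coefficients *)
Definition Ghat := nat -> Gelt.

Definition MaurerCartan (U : set vec) (g : vec -> 'M[R]_d) (Pi : Ghat) : Prop :=
  forall N : nat,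
    Gzero U (dbarG (Pi N) ++
      scaleG (2%:R)^-1 (flatten [seq bracketG g (Pi i) (Pi (N - i)%N) | i <- iota 0 N.+1])).

Definition hessian_metric (U : set vec) (g : vec -> 'M[R]_d) : Prop :=
  (forall x, U x -> (g x)^T = g x) /\
  (forall x, U x -> forall v : 'rV[R]_d, v != 0 -> 0 < (v *m g x *m v^T) 0 0) /\
  (exists phi : vec -> R, forall x, U x -> forall j k,
       g x j k = pdR (fun y => pdR phi j y) k x).

Definition PiWall (m n : lattice) (a : nat -> nat -> C) (Kb : nat -> nat)
  (delta : form) : Ghat := fun N =>
  if N is 0 then [::] else
  [seq (form_scale (- a N k) delta, m *+ k, n) | k <- iota 1 (Kb N)].

Definition delta_form (u2 : vec -> R) : form :=
  fun_mul (fun h x => (Num.sqrt (1 / (h * pi)) * expR (- (u2 x ^+ 2) / h))%:C) (dfun u2).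

End Defs.

(* Main.v *)
Require Import Defs.
From HB Require Import structures.
From mathcomp Require Import all_boot all_order all_algebra.
From mathcomp Require Import all_classical all_reals all_analysis.
From mathcomp Require Import complex ring lra.
Import Order.TTheory GRing.Theory Num.Theory.
Import numFieldNormedType.Exports.
Local Open Scope ring_scope.
Local Open Scope complex_scope.
Local Open Scope classical_set_scope.
Section A.
Variables (R : realType) (d : nat) (U : set (vec R d)) (hU : open U)
  (u2 : vec R d -> R) (l : 'rV[R]_d) (b : R)
  (hu : forall x, U x -> u2 x = \sum_(i < d) l 0 i * x 0 i + b).

Lemma line_near (y : vec R d) k : U y -> \forall s \near (0:R), U (y + s *: (@ebasis R d k)).
Proof.
move=> Uy.
have hc : (fun s : R => y + s *: (@ebasis R d k)) @ (nbhs (0:R)) --> y.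
  rewrite -[X in _ --> X]addr0 -[X in _ --> y + X](scale0r ((@ebasis R d k))).
  apply: cvgD; first exact: cvg_cst.
  apply: cvgZr_tmp. exact: cvg_id.
apply: hc. by move: hU; rewrite openE => /(_ y Uy).
Qed.

Lemma u2_line (y : vec R d) k s : U (y + s *: (@ebasis R d k)) -> U y ->
  u2 (y + s *: (@ebasis R d k)) = u2 y + s * l 0 k.
Proof.
move=> Us Uy; rewrite !hu //.
rewrite -addrA [b + _]addrC addrA; congr (_ + _).
under eq_bigr do rewrite !mxE mulrDr.
rewrite big_split /=; congr (_ + _).
rewrite (bigD1 k) //= big1 ?addr0; last first.
  by move=> i /negPf ik; rewrite ik mulr0 mulr0.
by rewrite eqxx mulr1 mulrC.
Qed.

Lemma pdR_u2 (y : vec R d) k : U y -> pdR u2 k y = l 0 k.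
Proof.
move=> Uy; rewrite /pdR derive1E.
rewrite (@near_eq_derive _ _ _ _ (fun s : R => u2 y + s * l 0 k)); last first.
  near=> s. apply: u2_line => //. near: s. exact: line_near.
have hd : is_derive (0:R) (1:R) (fun s : R => u2 y + s * l 0 k) (l 0 k).
  have -> : (fun s : R => u2 y + s * l 0 k) = cst (u2 y) + (l 0 k) \*: id.
    by apply/funext => s /=; rewrite mulrC.
  apply: is_derive_eq.
  by rewrite add0r /GRing.scale /= mulr1.
by case: hd.
Unshelve. all: by end_near.
Qed.
Definition phi (h t : R) : R := Num.sqrt (1 / (h * pi)) * expR (- (t ^+ 2) / h).

Lemma phi_der h t : is_derive t (1:R) (phi h) ('D_1 (phi h) t).
Proof.
apply: derivableP.
have -> : phi h = (Num.sqrt (1 / (h * pi))) \*: (expR \o ((- h^-1) \*: (@GRing.exp R ^~ 2))).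
  by apply/funext => s /=; rewrite /phi /GRing.scale /=; congr (_ * expR _); rewrite !mulNr mulrC.
apply: derivableZ.
have H1 := derivableP (@derivableZ _ _ _ _ (- h^-1) _ _ (@exprn_derivable R 2 t 1)).
have H := is_derive1_comp (is_derive_expR _) H1.
by case: H.
Qed.

Lemma pdR_gauss h (G : vec R d -> R) (w : R) x k : U x ->
  (forall y, U y -> G y = w * phi h (u2 y)) ->
  pdR G k x = w * ('D_1 (phi h) (u2 x) * l 0 k).
Proof.
move=> Ux hG; rewrite /pdR derive1E.
rewrite (@near_eq_derive _ _ _ (fun s : R => G (x + s *: (@ebasis R d k))) (fun s : R => w * phi h (u2 x + s * l 0 k))); last first.
  near=> s. rewrite hG; last by near: s; exact: line_near.
  rewrite u2_line //. near: s. exact: line_near.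
have hd : is_derive (0:R) (1:R) (w \*: (phi h \o (fun s : R => u2 x + s * l 0 k)))
   (w *: ('D_1 (phi h) (u2 x) * l 0 k)).
  apply: is_deriveZ. apply: is_derive1_comp; last first.
    have -> : (fun s => u2 x + s * l 0 k) = cst (u2 x) + (l 0 k) \*: id.
      by apply/funext => s /=; rewrite mulrC.
    apply: is_derive_eq. by rewrite add0r /GRing.scale /= mulr1.
  rewrite mul0r addr0. exact: phi_der.
by case: hd.
Unshelve. all: by end_near.
Qed.
Local Close Scope classical_set_scope.
Definition Lc (K : {set 'I_d}) : R[i] := \sum_(k < d) (K == [set k])%:R * (l 0 k)%:C.
Definition Eh h x := 'D_1 (phi h) (u2 x).

Lemma set1_eq (i k : 'I_d) : ([set i] == [set k]) = (i == k).
Proof.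
apply/eqP/eqP => [|-> //]. by move/setP/(_ i); rewrite !inE eqxx => /esym/eqP.
Qed.

Lemma Lc1 i : Lc [set i] = (l 0 i)%:C.
Proof.
rewrite /Lc (bigD1 i) //= set1_eq eqxx mul1r big1 ?addr0 // => k /negPf ki.
by rewrite set1_eq eq_sym ki mul0r.
Qed.

Lemma Lc0 (K : {set 'I_d}) : #|K| != 1%N -> Lc K = 0.
Proof.
move=> hK; rewrite /Lc big1 // => k _.
case: (K =P [set k]) hK => [-> |]; last by rewrite mul0r.
by rewrite cards1.
Qed.

Lemma delta_U h y (K : {set 'I_d}) : U y -> delta_form u2 h y K = (phi h (u2 y))%:C * Lc K.
Proof.
move=> Uy; rewrite /delta_form /fun_mul /dfun /Lc /phi; congr (_ * _).
by apply: eq_bigr => k _; rewrite pdR_u2.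
Qed.

Lemma cRe (r : R) (z : R[i]) : complex.Re (r%:C * z) = r * complex.Re z.
Proof. case: z => za zb /=. ring. Qed.
Lemma cIm (r : R) (z : R[i]) : complex.Im (r%:C * z) = r * complex.Im z.
Proof. case: z => za zb /=. ring. Qed.
Lemma cmk (r : R) (z : R[i]) : Complex (complex.Re z * r) (complex.Im z * r) = z * r%:C.
Proof. case: z => za zb /=. apply/eqP; rewrite eq_complex /=. apply/andP; split; apply/eqP; ring. Qed.

Lemma pd_delta c h x k (K : {set 'I_d}) : U x ->
  pd (fun y => form_scale c (delta_form u2) h y K) k x = c * Lc K * (Eh h x * l 0 k)%:C.
Proof.
move=> Ux; rewrite /pd.
rewrite (@pdR_gauss h _ (complex.Re (c * Lc K)) _ _ Ux); last first.
  by move=> y Uy; rewrite /form_scale delta_U // mulrCA cRe mulrC.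
rewrite (@pdR_gauss h _ (complex.Im (c * Lc K)) _ _ Ux); last first.
  by move=> y Uy; rewrite /form_scale delta_U // mulrCA cIm mulrC.
by rewrite cmk.
Qed.

Definition du2like (w : Defs.form R d) h x := exists A, forall K, w h x K = A * Lc K.

Lemma du2_delta c h x : U x -> du2like (form_scale c (delta_form u2)) h x.
Proof.
move=> Ux; exists (c * (phi h (u2 x))%:C) => K.
by rewrite /form_scale delta_U // mulrA.
Qed.

Lemma du2_nabla v c h x : U x -> du2like (nabla v (form_scale c (delta_form u2))) h x.
Proof.
move=> Ux; exists (c * \sum_(k < d) (v h x 0 k)%:C * (Eh h x * l 0 k)%:C) => K.
rewrite /nabla.
transitivity (\sum_(k < d) (c * ((v h x 0 k)%:C * (Eh h x * l 0 k)%:C)) * Lc K).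
  by apply: eq_bigr => k _; rewrite pd_delta //; ring.
by rewrite -mulr_suml -mulr_sumr.
Qed.

Lemma proj_delta p c :
  Defs.proj p (form_scale c (delta_form u2)) = form_scale ((p == 1%N)%:R * c) (delta_form u2).
Proof.
apply/funext => h; apply/funext => y; apply/funext => K.
rewrite /Defs.proj /form_scale.
have dz : #|K| != 1%N -> delta_form u2 h y K = 0.
  move=> hK; rewrite /delta_form /fun_mul /dfun big1 ?mulr0 // => k _.
  case: (K =P [set k]) hK => [-> |]; last by rewrite mul0r.
  by rewrite cards1.
case: (#|K| =P p) => [hK|hp].
  rewrite -hK; case: (#|K| =P 1%N) => [_ |/eqP h1]; first by rewrite mul1r.
  by rewrite dz // !mulr0.
case: (p =P 1%N) => [pe|]; last by move=> _; rewrite /= !mul0r.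
by rewrite dz ?mulr0 //; apply/eqP => e; apply: hp; rewrite pe.
Qed.
Lemma card_pairs (i j : 'I_d) :
  #|[set ij : 'I_d * 'I_d | (ij.1 \in [set i]) && (ij.2 \in [set j]) && (ij.2 < ij.1)%N]| = (j < i)%N.
Proof.
have -> : [set ij : 'I_d * 'I_d | (ij.1 \in [set i]) && (ij.2 \in [set j]) && (ij.2 < ij.1)%N]
   = if (j < i)%N then [set (i, j)] else finset.set0.
  apply/setP => -[p q]; rewrite !inE /=.
  case: (p =P i) => [->|pi] /=; case: (q =P j) => [->|qj] /=;
   case: ifP => ji; rewrite ?inE ?ji ?eqxx /=.
  all: rewrite ?xpair_eqE //.
  all: repeat (match goal with |- context [?a == ?b] => case: (a =P b) => ? end); simpl; try congruence.
by case: ifP => _; rewrite ?cards1 ?cards0.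
Qed.

Lemma wsign11 (i j : 'I_d) : i != j ->
  wsign R [set i] [set j] = - wsign R [set j] [set i].
Proof.
move=> ij; rewrite /wsign !card_pairs.
case: ltngtP => [ji|ji|e]; last by case/eqP: ij; apply: val_inj; exact: (esym e).
- by rewrite /= expr0 expr1.
- by rewrite /= expr0 expr1 opprK.
Qed.

Lemma wedge_du2 (fa fb : Defs.form R d) h x K :
  du2like fa h x -> du2like fb h x -> wedge fa fb h x K = 0.
Proof.
move=> [A hA] [B hB]; rewrite /wedge.
pose F (I J : {set 'I_d}) : R[i] :=
  if [disjoint I & J] && (I :|: J == K) then wsign R I J * Lc I * Lc J else 0.
transitivity (A * B * \sum_(I : {set 'I_d}) \sum_(J : {set 'I_d}) F I J).
  rewrite mulr_sumr; apply: eq_bigr => I _.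
  rewrite mulr_sumr big_mkcond /=; apply: eq_bigr => J _.
  rewrite /F; case: ifP => _; last by rewrite mulr0.
  rewrite hA hB; ring.
have FN : forall I J, F I J = - F J I.
  move=> I J; rewrite /F disjoint_sym finset.setUC.
  case: ifP => [/andP [dis _]|]; last by rewrite oppr0.
  case: (boolP (#|I| == 1%N)) => [/cards1P [i ei] | nI]; last first.
    by rewrite [Lc I]Lc0 // !mulr0 ?mul0r ?mulr0 oppr0.
  case: (boolP (#|J| == 1%N)) => [/cards1P [j ej] | nJ]; last first.
    by rewrite [Lc J]Lc0 // !mulr0 ?mul0r ?mulr0 oppr0.
  subst I J; move: dis; rewrite disjoints1 inE => ij.
  rewrite eq_sym in ij; rewrite !Lc1 (@wsign11 i j ij); ring.
set S := \sum_(I : {set 'I_d}) _.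
have SN : S = - S.
  rewrite {1}/S exchange_big /= -sumrN; apply: eq_bigr => J _.
  rewrite -sumrN; apply: eq_bigr => I _; exact: FN.
have : S + S = 0 by rewrite {1}SN addNr.
rewrite -mulr2n => /eqP; rewrite mulrn_eq0 /= => /eqP ->.
by rewrite mulr0.
Qed.
Ltac eqcase := repeat (match goal with |- context [?a == ?b] => case: (a =P b) => ? end); simpl; try congruence.

Lemma cnt2 (i j : 'I_d) : i != j ->
  #|[set y in [set i; j] | (y < i)%N]| = (j < i)%N.
Proof.
move=> ij.
have -> : [set y in [set i; j] | (y < i)%N] = if (j < i)%N then [set j] else finset.set0.
  apply/setP => y; rewrite !inE; case: ifP => ji; rewrite ?inE;
  case: (y =P i) => [e|yi]; case: (y =P j) => [e'|yj] => //=;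
  try (by move: ij; rewrite -e -e' eqxx); rewrite ?e ?e' ?ltnn ?ji //.
by case: ifP => _; rewrite ?cards1 ?cards0.
Qed.

Lemma dform_delta c h x K : U x -> dform (form_scale c (delta_form u2)) h x K = 0.
Proof.
move=> Ux; rewrite /dform.
under eq_bigr => k _ do rewrite pd_delta //.
case: (boolP (#|K| == 2%N)) => [/cards2P [i [j [ij ->]]] | nK]; last first.
  rewrite big1 // => k kK; rewrite [Lc _]Lc0; first by rewrite mulr0 mul0r mulr0.
  move: nK; apply: contra => /eqP h1; by rewrite (cardsD1 k K) kK h1.
rewrite big_setU1 /=; last by rewrite inE.
rewrite big_set1.
have e1 : [set i; j] :\ i = [set j].
  apply/setP => y; rewrite !inE;
  case: (y =P i) => [e|yi]; case: (y =P j) => [e'|yj] => //=;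
  try (by move: ij; rewrite -e -e' eqxx); rewrite ?e ?e' ?ltnn ?ji //.
have e2 : [set i; j] :\ j = [set i].
  apply/setP => y; rewrite !inE;
  case: (y =P i) => [e|yi]; case: (y =P j) => [e'|yj] => //=;
  try (by move: ij; rewrite -e -e' eqxx); rewrite ?e ?e' ?ltnn ?ji //.
have ji : j != i by rewrite eq_sym.
rewrite e1 e2 (@cnt2 i j ij) finset.setUC (@cnt2 j i ji) !Lc1 !rmorphM /=.
case: ltngtP => [lt|lt|e]; last by case/eqP: ij; apply: val_inj; first [exact: e | exact: (esym e)].
- rewrite /= expr0 expr1; ring.
- rewrite /= expr0 expr1; ring.
Qed.
End A.

Definition AllT {T} (Q : T -> Prop) (s : seq T) : Prop := foldr (fun t acc => Q t /\ acc) True s.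

Lemma AllT_cat T (Q : T -> Prop) (s1 s2 : seq T) : AllT Q s1 -> AllT Q s2 -> AllT Q (s1 ++ s2).
Proof. elim: s1 => //= a s IH [Ha Hs] H2; split; auto. Qed.

Lemma AllT_map T T' (P : T -> Prop) (Q : T' -> Prop) (f : T -> T') s :
  AllT P s -> (forall t, P t -> Q (f t)) -> AllT Q (map f s).
Proof. elim: s => //= a s IH [Ha Hs] H; split; auto. Qed.

Lemma AllT_mapT T T' (Q : T' -> Prop) (f : T -> T') s :
  (forall t, Q (f t)) -> AllT Q (map f s).
Proof. elim: s => //= a s IH H; split; auto. Qed.

Lemma AllT_flatten T (Q : T -> Prop) (ss : seq (seq T)) : AllT (AllT Q) ss -> AllT Q (flatten ss).
Proof. elim: ss => //= s ss IH [Hs Hss]; apply: AllT_cat; auto. Qed.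

Lemma coeffG_zero (R : realType) d (u : Gelt R d) m j h x K :
  AllT (fun t : term R d => t.2 0 j = 0 \/ t.1.1 h x K = 0) u -> coeffG u m j h x K = 0.
Proof.
elim: u => [|t u IH] /=; first by rewrite /coeffG big_nil.
move=> [Ht Hu]; rewrite /coeffG big_cons.
have := IH Hu; rewrite /coeffG => ->.
case: ifP => _ //; case: Ht => ->; by rewrite ?mulr0z ?mul0r ?mulr0 addr0.
Qed.

Lemma pairing_mulrn d (m n : lattice d) k : pairing (m *+ k) n = pairing m n *+ k.
Proof.
elim: k => [|k IH].
  by rewrite mulr0n /pairing big1 // => i _; rewrite mxE mul0r.
rewrite !mulrS -IH /pairing -big_split; apply: eq_bigr => i _; by rewrite mxE mulrDl.
Qed.

Lemma bracket_all (R : realType) d (g : vec R d -> 'M[R]_d) (P : term R d -> Prop) (Q : term R d -> Prop) u v :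
  AllT P u -> AllT P v -> (forall s t, P s -> P t -> AllT Q (br_term g s t)) ->
  AllT Q (bracketG g u v).
Proof.
move=> Hu Hv H; rewrite /bracketG.
apply: AllT_flatten.
apply: AllT_flatten.
apply: (@AllT_map _ _ P _ _ u Hu) => s Ps.
apply: (@AllT_map _ _ P _ _ v Hv) => t Pt.
exact: H.
Qed.
Local Close Scope classical_set_scope.

Theorem proposition4p4 (R : realType) (d : nat)
  (U : set (vec R d)) (hUopen : open U) (hUconv : convex_set U)
  (g : vec R d -> 'M[R]_d) (hg : hessian_metric U g)
  (m n : lattice d) (c : R)
  (hm : m != 0) (hn : primitive n) (hpar : pairing m n = 0)
  (hP : exists x, U x /\ pairingR n x = c)
  (a : nat -> nat -> R[i]) (Kb : nat -> nat)
  (ha : forall j k : nat, (Kb j < k)%N -> a j k = 0)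
  (u2 : vec R d -> R)
  (hu2aff : exists (l : 'rV[R]_d) (b : R),
       forall x, U x -> u2 x = \sum_(i < d) l 0 i * x 0 i + b)
  (hu2P : forall x, U x -> (u2 x = 0 <-> pairingR n x = c))
  (hu2pos : forall x, U x -> pairingR n x < c -> 0 < u2 x) :
  MaurerCartan U g (PiWall m n a Kb (delta_form u2)).
Proof.
have [l [b hu]] := hu2aff.
move=> N h hpos x Ux m' j K.
apply: coeffG_zero.
pose P (t : term R d) := exists c k, t = (form_scale c (delta_form u2), m *+ k, n).
have PiP : forall i, AllT P (PiWall m n a Kb (delta_form u2) i).
  case => [|i] //=; apply: AllT_mapT => k; by exists (- a i.+1 k), k.
apply: AllT_cat.
- apply: (@AllT_map _ _ P _ _ _ (PiP N)) => t [c1 [k ->]] /=; right.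
  exact: (@dform_delta R d U hUopen u2 l b hu _ _ _ _ Ux).
- apply: (@AllT_map _ _ (fun t : term R d => t.2 0 j = 0 \/ t.1.1 h x K = 0)); last first.
    move=> t [H|H] /=; [left|right]; first exact H.
    by rewrite /form_scale H mulr0.
  apply: AllT_flatten; apply: AllT_mapT => i.
  apply: (@bracket_all R d g P _ _ _ (PiP i) (PiP (N - i)%N)).
  move=> s t [c1 [k1 ->]] [c2 [k2 ->]] /=.
  split; [left|split; [right|split; [right|done]]].
  + by rewrite !pairing_mulrn hpar !mul0rn !mulr0z subrr mxE.
  + apply: (@wedge_du2 R d l); [exact: (@du2_delta R d U hUopen u2 l b hu _ _ _ Ux) | exact: (@du2_nabla R d U hUopen u2 l b hu _ _ _ _ Ux)].
  + rewrite big1 ?oppr0 // => p _; rewrite big1 // => q _.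
    rewrite !proj_delta (@wedge_du2 R d l) ?mulr0 //; [exact: (@du2_delta R d U hUopen u2 l b hu _ _ _ Ux) | exact: (@du2_nabla R d U hUopen u2 l b hu _ _ _ _ Ux)].
Qed.
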